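(* Let $A$ be a selfadjoint operator on a separable infinite-dimensional Hilbert space $\mathcal{H}$, and let $\mathcal{L}=(\mathcal{L}_n)$ be either an $A$-regular Galerkin sequence or, if $A\ge0$, an $A^{1/2}$-regular Galerkin sequence. Let $\lambda\in\mathbb{R}$, let $\mathcal{V}\subset\operatorname{D}(A)$ be a subspace of dimension $d>0$ with orthogonal projection $\pi_{\mathcal{V}}$, and let $\varepsilon>0$ be such that $\|\pi_{\mathcal{V}}(A-\lambda)x\|\le\varepsilon\|x\|$ for all $x\in\mathcal{V}$. Then there exist $N>0$ and subspaces $\mathcal{W}_n\subset\mathcal{L}_n$ of dimension $d$ such that, for all $n\ge N$, \[ \|\pi_{\mathcal{W}_n}(A-\lambda)y\|\le2\varepsilon\sqrt{d}\,\|y\|\qquad\forall y\in\mathcal{W}_n, \] where $\pi_{\mathcal{W}_n}$ is the orthogonal projection onto $\mathcal{W}_n$.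
   Context: A sequence $\mathcal{L}=(\mathcal{L}_n)$ of finite-dimensional subspaces $\mathcal{L}_n\subset\operatorname{D}(A)$ is $A$-regular if for every $f\in\operatorname{D}(A)$ there exist $f_n\in\mathcal{L}_n$ with $\|f_n-f\|+\|Af_n-Af\|\to0$. If $A\ge0$, finite-dimensional $\mathcal{L}_n\subset\operatorname{D}(A^{1/2})$ form an $A^{1/2}$-regular sequence if every $f\in\operatorname{D}(A^{1/2})$ is the limit of some $f_n\in\mathcal{L}_n$ in the norm $\|\cdot\|+\|A^{1/2}\cdot\|$; in that case, for a finite-dimensional subspace $\mathcal{W}\subset\operatorname{D}(A^{1/2})$ and $y\in\mathcal{W}$, $\pi_{\mathcal{W}}(A-\lambda)y$ is understood in the form sense, i.e. as the element $z\in\mathcal{W}$ with $\langle w,z\rangle=\langle A^{1/2}w,A^{1/2}y\rangle-\lambda\langle w,y\rangle$ for all $w\in\mathcal{W}$. *)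

(* Defs.v *)
From HB Require Import structures.
From mathcomp Require Import all_boot all_order all_algebra.
From mathcomp Require Import complex.
From mathcomp Require Import boolp classical_sets reals.
Set Implicit Arguments. Unset Strict Implicit. Unset Printing Implicit Defensive.
Import Order.TTheory GRing.Theory Num.Theory.
Local Open Scope ring_scope.
Local Open Scope classical_set_scope.

Section Hilbert.
Variables (R : realType) (H : lmodType R[i]) (ip : H -> H -> R[i]).

Definition hnorm (x : H) : R := Num.sqrt (@complex.Re R (ip x x)).

Definition lin_indep (d : nat) (b : 'I_d -> H) : Prop :=
  forall c : 'I_d -> R[i], \sum_(i < d) c i *: b i = 0 -> forall i, c i = 0.

Definition is_sep_inf_dim_hilbert : Prop :=
  [/\ (forall a x y z, ip (a *: x + y) z = a * ip x z + ip y z),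
      (forall x y, ip y x = (ip x y)^*),
      (forall x, 0 <= ip x x),
      (forall x, ip x x = 0 -> x = 0) &
   [/\
      (forall u : nat -> H,
         (forall e : R, 0 < e -> exists N, forall m n, (N <= m)%N -> (N <= n)%N ->
              hnorm (u m - u n) < e) ->
         exists l, forall e : R, 0 < e -> exists N, forall n, (N <= n)%N ->
              hnorm (u n - l) < e) ,
      (exists s : nat -> H, forall x (e : R), 0 < e -> exists n, hnorm (x - s n) < e) &
      (forall d, exists b : 'I_d -> H, lin_indep b)]].

Definition is_subspace (S : set H) : Prop :=
  S 0 /\ forall (a : R[i]) x y, S x -> S y -> S (a *: x + y).

Definition has_dim (S : set H) (d : nat) : Prop :=
  is_subspace S /\
  exists b : 'I_d -> H, [/\ forall i, S (b i), lin_indep b &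
     forall x, S x -> exists c : 'I_d -> R[i], x = \sum_(i < d) c i *: b i].

Definition fin_dim (S : set H) : Prop := exists d, has_dim S d.

Definition orth_proj (W : set H) (v : H) : H :=
  xget 0 [set w | W w /\ forall u, W u -> ip (v - w) u = 0].

(* (possibly unbounded) operators: a map A together with its domain DA;
   selfadjointness: dense linear domain, A linear on it, and the adjoint
   A^* (defined through the inner product) has domain DA and equals A. *)
Definition selfadjoint (A : H -> H) (DA : set H) : Prop :=
  [/\ is_subspace DA,
      (forall (a : R[i]) x y, DA x -> DA y -> A (a *: x + y) = a *: A x + A y),
      (forall x (e : R), 0 < e -> exists y, DA y /\ hnorm (x - y) < e) &
      (forall y z, (forall x, DA x -> ip (A x) y = ip x z) <-> (DA y /\ z = A y))].

Definition nonneg_op (A : H -> H) (DA : set H) : Prop :=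
  forall x, DA x -> 0 <= ip (A x) x.

Definition is_sqrt_op (A : H -> H) (DA : set H) (B : H -> H) (DB : set H) : Prop :=
  [/\ selfadjoint B DB, nonneg_op B DB,
      (forall x, DA x <-> (DB x /\ DB (B x))) &
      (forall x, DA x -> A x = B (B x))].

Definition galerkin (L : nat -> set H) : Prop :=
  forall n, fin_dim (L n).

Definition regular (T : H -> H) (DT : set H) (L : nat -> set H) : Prop :=
  (forall n, L n `<=` DT) /\
  forall f, DT f -> exists fn : nat -> H, (forall n, L n (fn n)) /\
    forall e : R, 0 < e -> exists N, forall n, (N <= n)%N ->
      hnorm (fn n - f) + hnorm (T (fn n) - T f) < e.

(* form-sense projection pi_W (A - lam) y, with B = A^{1/2}:
   the z in W with <w,z> = <Bw,By> - lam <w,y> for all w in W *)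
Definition form_proj (B : H -> H) (lam : R) (W : set H) (y : H) : H :=
  xget 0 [set z | W z /\ forall w, W w -> ip w z = ip (B w) (B y) - (lam%:C)%C * ip w y].

End Hilbert.

(* Main.v *)
Require Import Defs.
From HB Require Import structures.
From mathcomp Require Import all_boot all_order all_algebra.
From mathcomp Require Import complex.
From mathcomp Require Import boolp classical_sets reals.
From mathcomp Require Import ring lra.
Import Order.TTheory GRing.Theory Num.Theory.
Local Open Scope ring_scope.
Local Open Scope classical_set_scope.

Section Cabs.
Context {R : realType}.
Definition cabs (z : R[i]) : R := complex.Re `|z|.

Lemma cabsE z : `|z| = (cabs z)%:C%C.
Proof. by rewrite /cabs normc_def. Qed.

Lemma cabs_ge0 z : 0 <= cabs z.
Proof. by rewrite -(@lecR R) -cabsE rmorph0. Qed.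

Lemma cabsM a b : cabs (a * b) = cabs a * cabs b.
Proof. by apply: (@complexI R); rewrite rmorphM /= -!cabsE normrM. Qed.

Lemma cabsJ a : cabs a^* = cabs a.
Proof. by apply: (@complexI R); rewrite -!cabsE norm_conjC. Qed.

Lemma cabsN a : cabs (- a) = cabs a.
Proof. by apply: (@complexI R); rewrite -!cabsE normrN. Qed.

Lemma cabsD a b : cabs (a + b) <= cabs a + cabs b.
Proof. by rewrite -(@lecR R) rmorphD /= -!cabsE ler_normD. Qed.

Lemma cabs0 : cabs 0 = 0.
Proof. by apply: (@complexI R); rewrite -!cabsE normr0. Qed.

Lemma cabs_eq0 a : cabs a = 0 -> a = 0.
Proof. by move=> h; apply/eqP; rewrite -normr_eq0 cabsE h. Qed.

Lemma cabs_real (r : R) : cabs (r%:C)%C = `|r|.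
Proof. by rewrite /cabs normc_def /= expr0n /= addr0 sqrtr_sqr. Qed.

Lemma cabs2 a : ((cabs a ^+ 2)%:C)%C = a * a^*.
Proof. by rewrite rmorphXn /= -cabsE normCK. Qed.

Lemma Re_le_cabs a : complex.Re a <= cabs a.
Proof.
rewrite /cabs normc_def /=. case: a => x y /=.
apply: (le_trans (ler_norm x)); rewrite -sqrtr_sqr.
by rewrite ler_sqrt ?addr_ge0 ?sqr_ge0 // lerDl sqr_ge0.
Qed.

Lemma cabs_sum n (F : 'I_n -> R[i]) : cabs (\sum_(i < n) F i) <= \sum_(i < n) cabs (F i).
Proof.
elim/big_ind2: _ => //; first by rewrite cabs0.
by move=> a b x y h1 h2; apply: (le_trans (cabsD _ _)); apply: lerD.
Qed.
Lemma rCM (a b : R) : ((a%:C)%C * (b%:C)%C) = ((a * b)%:C)%C.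
Proof. by rewrite rmorphM. Qed.
Lemma rC1 : ((1 : R)%:C)%C = 1.
Proof. by rewrite rmorph1. Qed.
Lemma rC0 : ((0 : R)%:C)%C = 0.
Proof. by rewrite rmorph0. Qed.
End Cabs.
Section IP.
Variables (R : realType) (H : lmodType R[i]) (ip : H -> H -> R[i]).
Hypothesis ipL : forall a x y z, ip (a *: x + y) z = a * ip x z + ip y z.
Hypothesis ipC : forall x y, ip y x = (ip x y)^*.
Hypothesis ip_ge0 : forall x, 0 <= ip x x.
Hypothesis ip_eq0 : forall x, ip x x = 0 -> x = 0.

Local Notation hn := (hnorm ip).

Lemma ipDl x y z : ip (x + y) z = ip x z + ip y z.
Proof. by rewrite -[x]scale1r ipL mul1r scale1r. Qed.
Lemma ip0l z : ip 0 z = 0.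
Proof.
have := ipL 1 0 0 z; rewrite scale1r addr0 mul1r => /(congr1 (fun t => t - ip 0 z)).
by rewrite subrr addrK.
Qed.
Lemma ipZl a x z : ip (a *: x) z = a * ip x z.
Proof. by rewrite -[a *: x]addr0 ipL ip0l addr0. Qed.
Lemma ipNl x z : ip (- x) z = - ip x z.
Proof. by rewrite -scaleN1r ipZl mulN1r. Qed.
Lemma ipBl x y z : ip (x - y) z = ip x z - ip y z.
Proof. by rewrite ipDl ipNl. Qed.
Lemma ipDr x y z : ip z (x + y) = ip z x + ip z y.
Proof. by rewrite ipC ipDl rmorphD /= -!ipC. Qed.
Lemma ipZr a x z : ip z (a *: x) = a^* * ip z x.
Proof. by rewrite ipC ipZl rmorphM /= -ipC. Qed.
Lemma ip0r z : ip z 0 = 0.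
Proof. by rewrite ipC ip0l rmorph0. Qed.
Lemma ipNr x z : ip z (- x) = - ip z x.
Proof. by rewrite ipC ipNl rmorphN /= -ipC. Qed.
Lemma ipBr x y z : ip z (x - y) = ip z x - ip z y.
Proof. by rewrite ipDr ipNr. Qed.
Lemma ip_suml n (F : 'I_n -> H) z : ip (\sum_(i < n) F i) z = \sum_(i < n) ip (F i) z.
Proof. by elim/big_ind2: _ => [|a b c d <- <-|]; rewrite ?ip0l ?ipDl. Qed.
Lemma ip_sumr n (F : 'I_n -> H) z : ip z (\sum_(i < n) F i) = \sum_(i < n) ip z (F i).
Proof. by elim/big_ind2: _ => [|a b c d <- <-|]; rewrite ?ip0r ?ipDr. Qed.

Lemma ipxx x : ip x x = ((hn x ^+ 2)%:C)%C.
Proof.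
rewrite /hnorm sqr_sqrtr.
  by rewrite RRe_real // ger0_real.
by rewrite -(@lecR R) RRe_real ?ger0_real // rmorph0.
Qed.

Lemma hn_ge0 x : 0 <= hn x.
Proof. exact: sqrtr_ge0. Qed.

Lemma hn_eq0 x : hn x = 0 -> x = 0.
Proof. by move=> h; apply: ip_eq0; rewrite ipxx h expr0n /= rmorph0. Qed.

Lemma hn0 : hn 0 = 0.
Proof. by rewrite /hnorm ip0l /= sqrtr0. Qed.

Lemma hn_sq x : hn x ^+ 2 = complex.Re (ip x x).
Proof. by rewrite ipxx. Qed.

Lemma hnZ a x : hn (a *: x) = cabs a * hn x.
Proof.
apply/eqP; rewrite -(eqrXn2 (n:=2)) ?mulr_ge0 ?cabs_ge0 ?hn_ge0 //.
apply/eqP; apply: (@complexI R).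
by rewrite -ipxx exprMn rmorphM /= cabs2 -ipxx ipZl ipZr mulrA.
Qed.

Lemma hnN x : hn (- x) = hn x.
Proof. by rewrite -scaleN1r hnZ cabsN -(rmorph1 (real_complex R)) cabs_real normr1 mul1r. Qed.

Lemma hnB x y : hn (x - y) = hn (y - x).
Proof. by rewrite -hnN opprB. Qed.

Lemma CS x y : cabs (ip x y) <= hn x * hn y.
Proof.
have [y0|yn0] := eqVneq (hn y) 0.
  by rewrite (hn_eq0 _ y0) ip0r cabs0 hn0 mulr0.
have hy : 0 < hn y by rewrite lt_def yn0 hn_ge0.
set a := ip x y; set b := hn y ^+ 2.
have key : 0 <= ip (b%:C%C *: x - a *: y) (b%:C%C *: x - a *: y) by [].
have E : ip (b%:C%C *: x - a *: y) (b%:C%C *: x - a *: y)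
   = b%:C%C * (b%:C%C * (hn x ^+ 2)%:C%C - (cabs a ^+ 2)%:C%C).
  rewrite !ipBl !ipBr !ipZl !ipZr !ipxx -/b conj_Creal ?ger0_real ?ler0c ?sqr_ge0 //.
  rewrite (ipC x y) -/a cabs2.
  by ring.
move: key; rewrite E -rmorphM -rmorphB -rmorphM ler0c ; rewrite (pmulr_rge0 _ (exprn_gt0 2 hy)) subr_ge0 => h.
rewrite -(ler_pXn2r (n:=2)) ?nnegrE ?mulr_ge0 ?cabs_ge0 ?hn_ge0 //.
by rewrite exprMn mulrC.
Qed.

Lemma hnD x y : hn (x + y) <= hn x + hn y.
Proof.
rewrite -(ler_pXn2r (n:=2)) ?nnegrE ?addr_ge0 ?hn_ge0 //.
rewrite hn_sq ipDl !ipDr !raddfD /= -!hn_sq (ipC x y).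
have h1 := Re_le_cabs (ip x y); have h2 := CS x y.
have : complex.Re (ip x y)^* = complex.Re (ip x y) by case: (ip x y).
move=> ->. nra.
Qed.

Lemma hn_sum n (c : 'I_n -> R[i]) (v : 'I_n -> H) :
  hn (\sum_(i < n) c i *: v i) <= \sum_(i < n) cabs (c i) * hn (v i).
Proof.
elim/big_ind2: _ => [|x1 x2 y1 y2 h1 h2|i]; first by rewrite hn0.
  by apply: (le_trans (hnD _ _)); apply: lerD.
by rewrite hnZ.
Qed.

Lemma kron_sum n (F : nat -> R[i]) j : (j < n)%N ->
  \sum_(i < n) F i * ((i : nat) == j)%:R = F j.
Proof.
move=> hj; rewrite (bigD1 (Ordinal hj)) //= eqxx mulr1 big1 ?addr0 // => k hk.
suff -> : ((k : nat) == j) = false by rewrite mulr0.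
by apply/negbTE; apply: contra hk => /eqP e; apply/eqP; apply: val_inj.
Qed.

Lemma kron_sumZ n (F : nat -> H) j : (j < n)%N ->
  \sum_(i < n) ((i : nat) == j)%:R *: F i = F j.
Proof.
move=> hj; rewrite (bigD1 (Ordinal hj)) //= eqxx scale1r big1 ?addr0 // => k hk.
suff -> : ((k : nat) == j) = false by rewrite scale0r.
by apply/negbTE; apply: contra hk => /eqP e; apply/eqP; apply: val_inj.
Qed.

Implicit Types S : set H.
Lemma sub0 {S} : is_subspace S -> S 0.
Proof. by case. Qed.
Lemma subZD S a x y : is_subspace S -> S x -> S y -> S (a *: x + y).
Proof. by case=> _; apply. Qed.
Lemma subD S x y : is_subspace S -> S x -> S y -> S (x + y).
Proof. by move=> hS hx hy; rewrite -[x]scale1r; apply: subZD. Qed.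
Lemma subZ S a x : is_subspace S -> S x -> S (a *: x).
Proof. by move=> hS hx; rewrite -[_ *: _]addr0; apply: subZD => //; apply: sub0. Qed.
Lemma subB S x y : is_subspace S -> S x -> S y -> S (x - y).
Proof. by move=> hS hx hy; apply: subD => //; rewrite -scaleN1r; apply: subZ. Qed.
Lemma sub_sum S n (F : 'I_n -> H) : is_subspace S -> (forall i, S (F i)) ->
  S (\sum_(i < n) F i).
Proof.
move=> hS hF; elim/big_ind: _ => //; first exact: sub0.
by move=> x y; apply: subD.
Qed.

Definition spanN n (b : nat -> H) : set H :=
  [set x | exists c : nat -> R[i], x = \sum_(i < n) c i *: b i].

Lemma span_sub n b : is_subspace (spanN n b).
Proof.
split; first by exists (fun _ => 0); rewrite big1 // => i _; rewrite scale0r.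
move=> a x y [c ->] [c' ->]; exists (fun i => a * c i + c' i).
rewrite scaler_sumr -big_split /=; apply: eq_bigr => i _.
by rewrite scalerDl scalerA.
Qed.

Lemma span_mem n b i : (i < n)%N -> spanN n b (b i).
Proof. by move=> hi; exists (fun k => (k == i)%:R); rewrite kron_sumZ. Qed.

Lemma span_min n b S : is_subspace S -> (forall i, (i < n)%N -> S (b i)) ->
  spanN n b `<=` S.
Proof.
move=> hS hb x [c ->]; apply: sub_sum => // i; apply: subZ => //; exact: hb.
Qed.

Lemma span_mono n m b : (n <= m)%N -> spanN n b `<=` spanN m b.
Proof.
move=> hnm; apply: span_min; first exact: span_sub.
by move=> i hi; apply: span_mem; apply: leq_trans hnm.
Qed.

Lemma span_ext n b b' : (forall i, (i < n)%N -> b i = b' i) -> spanN n b `<=` spanN n b'.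
Proof.
move=> he; apply: span_min; first exact: span_sub.
by move=> i hi; rewrite he //; apply: span_mem.
Qed.

Definition ortho n (e : nat -> H) :=
  forall i j, (i < n)%N -> (j < n)%N -> ip (e i) (e j) = (i == j)%:R.

Definition indepN n (b : nat -> H) :=
  forall c : nat -> R[i], \sum_(i < n) c i *: b i = 0 -> forall i, (i < n)%N -> c i = 0.

Lemma ltS_cases i n : (i < n.+1)%N -> i = n \/ (i < n)%N.
Proof. by rewrite ltnS leq_eqVlt => /orP[/eqP ->|h]; [left|right]. Qed.

Lemma GS n (b : nat -> H) : indepN n b -> exists e, [/\ ortho n e,
  (forall i, (i < n)%N -> spanN n b (e i)) &
  (forall i, (i < n)%N -> spanN n e (b i))].
Proof.
elim: n b => [|n IH] b hind.
  by exists b; split => i.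
have hind' : indepN n b.
  move=> c hc i hi; pose c' k := if (k < n)%N then c k else 0.
  have := hind c' _ i (ltnW hi); rewrite /c' hi; apply.
  rewrite big_ord_recr /= ltnn scale0r addr0 -[RHS]hc.
  by apply: eq_bigr => k _; rewrite ltn_ord.
have [e' [h1 h2 h3]] := IH b hind'.
set v := b n - \sum_(i < n) ip (b n) (e' i) *: e' i.
have ov : forall j, (j < n)%N -> ip v (e' j) = 0.
  move=> j hj; rewrite ipBl ip_suml.
  under eq_bigr => i _ do rewrite ipZl h1 //.
  by rewrite (kron_sum n (fun k => ip (b n) (e' k)) j hj) subrr.
have sp1 : spanN n e' `<=` spanN n b by apply: span_min; [exact: span_sub|].
have vn0 : hn v != 0.
  apply/eqP => /hn_eq0 v0.
  have : spanN n b (b n).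
    have -> : b n = \sum_(i < n) ip (b n) (e' i) *: e' i by apply/eqP; rewrite -subr_eq0 -/v v0.
    apply: sp1; apply: sub_sum; first exact: span_sub.
    by move=> i; apply: subZ; [exact: span_sub| exact: span_mem].
  case=> d hd; pose c k := if (k < n)%N then d k else -1.
  have hc : \sum_(i < n.+1) c i *: b i = 0.
    rewrite big_ord_recr /= /c ltnn scaleN1r.
    rewrite (eq_bigr (fun i : 'I_n => d i *: b i)) -?hd ?subrr // => k _.
    by rewrite ltn_ord.
  by have := hind c hc n (ltnSn n); rewrite /c ltnn => /eqP; rewrite oppr_eq0 oner_eq0.
have hv : 0 < hn v by rewrite lt_def vn0 hn_ge0.
set s := (hn v)^-1.
set ev := (s%:C)%C *: v.
exists (fun k => if (k < n)%N then e' k else ev); split.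
- move=> i j /ltS_cases [->|hi] /ltS_cases [->|hj].
  + rewrite ltnn eqxx ipZl ipZr conj_Creal ?ger0_real ?ler0c ?invr_ge0 ?hn_ge0 //.
    rewrite ipxx !rCM -rC1; congr (_ %:C)%C.
    by rewrite /s mulrA -expr2 -exprMn mulVf // expr1n.
  + by rewrite ltnn hj ipZl ov // mulr0 gtn_eqF.
  + by rewrite ltnn hi ipZr (ipC v) ov // conjC0 mulr0 ltn_eqF.
  + by rewrite hi hj h1.
- move=> i; move=> /ltS_cases [->|hi].
    rewrite ltnn; apply: subZ; first exact: span_sub.
    apply: subB; first exact: span_sub.
      exact: span_mem.
    apply: sub_sum; first exact: span_sub.
    move=> k; apply: subZ; first exact: span_sub.
    by apply: (@span_mono n n.+1 b (leqnSn n)); apply: h2.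
  by rewrite hi; apply: (@span_mono n n.+1 b (leqnSn n)); apply: h2.
- have sp2 : spanN n e' `<=` spanN n.+1 (fun k => if (k < n)%N then e' k else ev).
    apply: subset_trans (@span_mono n n.+1 _ (leqnSn n)).
    by apply: span_ext => i hi; rewrite hi.
  move=> i; move=> /ltS_cases [->|hi]; last by apply: sp2; apply: h3.
  have -> : b n = (hn v)%:C%C *: ev + \sum_(i < n) ip (b n) (e' i) *: e' i.
    rewrite /ev scalerA rCM /s mulfV // rC1 scale1r /v.
    by rewrite subrK.
  apply: subD; first exact: span_sub.
    apply: subZ; first exact: span_sub.
    by have := @span_mem n.+1 (fun k => if (k < n)%N then e' k else ev) n (ltnSn n); rewrite ltnn.
  apply: sub_sum; first exact: span_sub.
  move=> k; apply: subZ; first exact: span_sub.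
  by apply: sp2; apply: span_mem.
Qed.

Definition comb d (c : 'I_d -> R[i]) (g : nat -> H) := \sum_(i < d) c i *: g i.
Definition sabs d (c : 'I_d -> R[i]) := \sum_(i < d) cabs (c i).
Arguments comb {d}.
Arguments sabs {d}.

Lemma sabs_ge0 {d} c : 0 <= @sabs d c.
Proof. by apply: sumr_ge0 => i _; apply: cabs_ge0. Qed.

Lemma comb_bound d c g M : (forall i, (i < d)%N -> hn (g i) <= M) ->
  hn (@comb d c g) <= sabs c * M.
Proof.
move=> hg; apply: le_trans (hn_sum _ _ _) _; rewrite /sabs mulr_suml.
by apply: ler_sum => i _; apply: ler_wpM2l; [exact: cabs_ge0| exact: hg].
Qed.

Lemma combB d c g g' : @comb d c g - comb c g' = comb c (fun k => g k - g' k).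
Proof. by rewrite /comb -sumrB; apply: eq_bigr => i _; rewrite scalerBr. Qed.

Lemma ortho_coef d e (c : 'I_d -> R[i]) (j : 'I_d) : ortho d e ->
  ip (comb c e) (e j) = c j.
Proof.
move=> he; rewrite /comb ip_suml.
rewrite (bigD1 j) //= ipZl he // eqxx mulr1 big1 ?addr0 // => k hk.
rewrite ipZl he ?ltn_ord // (_ : ((k : nat) == j) = false) ?mulr0 //.
by apply/negbTE.
Qed.

Arguments ortho_coef {d e}.
Lemma ortho_hn {d e} i : ortho d e -> (i < d)%N -> hn (e i) = 1.
Proof.
move=> he hi; apply/eqP; rewrite -(eqrXn2 (n:=2)) ?hn_ge0 // expr1n.
by rewrite hn_sq he // eqxx.
Qed.

Lemma sabs_le d e c : ortho d e -> sabs c <= d%:R * hn (@comb d c e).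
Proof.
move=> he; rewrite /sabs.
apply: (@le_trans _ _ (\sum_(i < d) hn (comb c e))).
  apply: ler_sum => i _; rewrite -(ortho_coef c i he).
  by apply: (le_trans (CS _ _)); rewrite (ortho_hn _ he) // mulr1.
by rewrite sumr_const card_ord mulr_natl.
Qed.

Arguments sabs_le {d e}.
Lemma proj_ex n e S : ortho n e -> is_subspace S -> (forall i, (i < n)%N -> S (e i)) ->
  S `<=` spanN n e -> forall v, exists w, S w /\ forall u, S u -> ip (v - w) u = 0.
Proof.
move=> he hS heS hSs v; exists (\sum_(i < n) ip v (e i) *: e i); split.
  by apply: sub_sum => // i; apply: subZ => //; apply: heS.
move=> u /hSs [a ->]; rewrite ip_sumr big1 // => j _.
rewrite ipZr ipBl ip_suml.
under eq_bigr => i _ do rewrite ipZl he //.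
by rewrite (kron_sum n (fun k => ip v (e k)) j (ltn_ord j)) subrr mulr0.
Qed.

Section Main.
Variables (d : nat) (e f : nat -> H).
Hypothesis he : ortho d e.
Variable delta0 : R.
Hypothesis hd0 : 0 <= delta0.
Hypothesis hdd : d%:R * delta0 <= 1 / 4.
Hypothesis hfe : forall i, (i < d)%N -> hn (f i - e i) <= delta0.

Lemma lowerY c : 3 / 4 * hn (comb c e) <= hn (@comb d c f).
Proof.
have h1 : hn (comb c f - comb c e) <= sabs c * delta0.
  by rewrite combB; apply: comb_bound.
have h2 : hn (comb c e) <= hn (comb c f) + hn (comb c f - comb c e).
  by rewrite hnB; apply: le_trans (hnD _ _); rewrite addrC subrK.
have h3 := sabs_le c he.
have h4 : sabs c * delta0 <= d%:R * hn (comb c e) * delta0 by apply: ler_wpM2r.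
have h5 := hn_ge0 (comb c e).
have h6 : hn (comb c e) * (d%:R * delta0) <= hn (comb c e) * (1 / 4) by apply: ler_wpM2l.
have h7 : d%:R * hn (comb c e) * delta0 = hn (comb c e) * (d%:R * delta0) by ring.
lra.
Qed.

Lemma indepY c : @comb d c f = 0 -> forall i, c i = 0.
Proof.
move=> h0 i; have := lowerY c; rewrite h0 hn0 => hl.
have : hn (comb c e) = 0 by apply/le_anti; rewrite hn_ge0 andbT; nra.
by move/hn_eq0 => h; rewrite -(ortho_coef c i he) h ip0l.
Qed.

Lemma main_est (h : H -> H -> R[i]) eps eta :
  0 <= eta -> d%:R ^+ 2 * eta <= eps / 8 -> 0 <= eps ->
  (forall c a : 'I_d -> R[i], cabs (h (comb c f) (comb a f) - h (comb c e) (comb a e)) <= sabs c * sabs a * eta) ->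
  (forall c a : 'I_d -> R[i], cabs (h (comb c e) (comb a e)) <= eps * hn (comb c e) * hn (@comb d a e)) ->
  forall c a : 'I_d -> R[i], cabs (h (comb c f) (comb a f)) <= 2 * eps * hn (comb c f) * hn (@comb d a f).
Proof.
move=> heta hde heps hdiff hV c a.
have hx := hn_ge0 (comb c e); have hu := hn_ge0 (comb a e).
have ly := lowerY c; have lw := lowerY a.
have s1 := sabs_le c he; have s2 := sabs_le a he.
have s1p := sabs_ge0 c; have s2p := sabs_ge0 a.
have t6 := hV c a.
set x := hn (comb c e) in hx ly s1 t6 *; set u := hn (comb a e) in hu lw s2 t6 *.
have t1 : cabs (h (comb c f) (comb a f)) <=
    cabs (h (comb c e) (comb a e)) + sabs c * sabs a * eta.
  apply: le_trans (lerD (lexx _) (hdiff c a)).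
  by apply: le_trans (cabsD _ _); rewrite addrC subrK.
have t2 : sabs c * sabs a <= (d%:R * x) * (d%:R * u) by apply: ler_pM.
have t3 : sabs c * sabs a * eta <= (d%:R * x) * (d%:R * u) * eta by apply: ler_wpM2r.
have t4 : (d%:R * x) * (d%:R * u) * eta = x * u * (d%:R ^+ 2 * eta) by ring.
have t5 : x * u * (d%:R ^+ 2 * eta) <= x * u * (eps / 8) by apply: ler_wpM2l => //; apply: mulr_ge0.
have t7 : 3 / 4 * x * (3 / 4 * u) <= hn (comb c f) * hn (comb a f).
  by apply: ler_pM => //; apply: mulr_ge0 => //; lra.
have t8 : 0 <= x * u by apply: mulr_ge0.
nra.
Qed.
End Main.

Definition linon (P : H -> H) (D : set H) :=
  forall a x y, D x -> D y -> P (a *: x + y) = a *: P x + P y.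

Lemma lin0 P D : is_subspace D -> linon P D -> P 0 = 0.
Proof.
move=> hD hP; have := hP 1 0 0 (sub0 hD) (sub0 hD).
rewrite scale1r addr0 scale1r => /(congr1 (fun t => t - P 0)).
by rewrite subrr addrK.
Qed.

Lemma lin_comb P D d (c : 'I_d -> R[i]) g : is_subspace D -> linon P D ->
  (forall i, (i < d)%N -> D (g i)) -> P (comb c g) = comb c (fun k => P (g k)).
Proof.
move=> hD hP hg; rewrite /comb.
suff : D (\sum_(i < d) c i *: g i) /\ P (\sum_(i < d) c i *: g i) = \sum_(i < d) c i *: P (g i) by case.
elim/big_ind2: _ => [|x1 x2 y1 y2 [h1 <-] [h2 <-]|i].
- by split; [exact: sub0|exact: lin0 _ _ hD hP].
- by split; [exact: subD|rewrite -[x2 in P (x2 + _)]scale1r hP // scale1r].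
have hgi := hg i (ltn_ord i).
split; first by apply: subZ.
rewrite -[_ *: g i]addr0 hP //; last exact: sub0 hD.
by rewrite (lin0 _ _ hD hP) addr0.
Qed.

Arguments lin_comb {P D d}.
Lemma pair_est d e f (P Q : H -> H) D dl K : is_subspace D -> linon P D -> linon Q D ->
  (forall i, (i < d)%N -> D (e i) /\ D (f i)) -> 0 <= dl -> 0 <= K ->
  (forall i, (i < d)%N -> [/\ hn (P (f i) - P (e i)) <= dl, hn (Q (f i) - Q (e i)) <= dl,
        hn (P (e i)) <= K & hn (Q (e i)) <= K]) ->
  forall c a : 'I_d -> R[i], cabs (ip (P (comb c f)) (Q (comb a f)) - ip (P (comb c e)) (Q (@comb d a e)))
     <= sabs c * sabs a * (dl * (2 * K + dl)).
Proof.
move=> hD hP hQ hef hdl hK hb c a.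
have hDe i : (i < d)%N -> D (e i) by move=> /hef [].
have hDf i : (i < d)%N -> D (f i) by move=> /hef [].
rewrite !(lin_comb _ _ hD hP) // !(lin_comb _ _ hD hQ) //.
set p := comb c _; set p' := comb c _; set q := comb a _; set q' := comb a _.
have -> : ip p q - ip p' q' = ip (p - p') q + ip p' (q - q').
  by rewrite ipBl ipBr; ring.
have e1 : hn (p - p') <= sabs c * dl by rewrite /p /p' combB; apply: comb_bound => i /hb [].
have e2 : hn (q - q') <= sabs a * dl by rewrite /q /q' combB; apply: comb_bound => i /hb [].
have e3 : hn p' <= sabs c * K by apply: comb_bound => i /hb [].
have e4 : hn q' <= sabs a * K by apply: comb_bound => i /hb [].
have e5 : hn q <= hn q' + hn (q - q') by apply: le_trans (hnD _ _); rewrite addrC subrK.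
have c1 := CS (p - p') q; have c2 := CS p' (q - q').
have n1 := hn_ge0 (p - p'); have n2 := hn_ge0 q; have n3 := hn_ge0 p'; have n4 := hn_ge0 (q - q').
have s1 := sabs_ge0 c; have s2 := sabs_ge0 a.
have m1 : hn (p - p') * hn q <= (sabs c * dl) * (sabs a * K + sabs a * dl).
  by apply: ler_pM => //; lra.
have m2 : hn p' * hn (q - q') <= (sabs c * K) * (sabs a * dl) by apply: ler_pM.
apply: le_trans (cabsD _ _) _.
have -> : sabs c * sabs a * (dl * (2 * K + dl)) =
   (sabs c * dl) * (sabs a * K + sabs a * dl) + (sabs c * K) * (sabs a * dl) by ring.
by apply: lerD; [apply: le_trans c1 m1|apply: le_trans c2 m2].
Qed.

Lemma small3 (a b c : R) : 0 < a -> 0 < b -> 0 < c ->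
  exists dl : R, [/\ 0 < dl, dl <= a, dl <= b & dl <= c].
Proof.
move=> ha hb hc; exists (Num.min a (Num.min b c)); split.
- by rewrite !lt_min ha hb hc.
- by rewrite ge_min lexx.
- by rewrite !ge_min lexx orbT.
- by rewrite !ge_min lexx !orbT.
Qed.

Lemma unifN (P : nat -> nat -> Prop) d :
  (forall i, (i < d)%N -> exists N, forall n, (N <= n)%N -> P i n) ->
  exists N, forall n, (N <= n)%N -> forall i, (i < d)%N -> P i n.
Proof.
elim: d => [|d IH] h; first by exists 0%N => n _ i; rewrite ltn0.
have [N1 h1] := IH (fun i hi => h i (leqW hi)).
have [N2 h2] := h d (ltnSn d).
exists (maxn N1 N2) => n; rewrite geq_max => /andP[n1 n2] i /ltS_cases [->|hi].
  exact: h2.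
exact: h1.
Qed.

Lemma finish (L : nat -> set H) d (e : nat -> H) (F : nat -> nat -> H)
  (h : H -> H -> R[i]) eps :
  (0 < d)%N -> 0 < eps -> ortho d e ->
  (forall n, is_subspace (L n)) -> (forall i n, (i < d)%N -> L n (F i n)) ->
  (forall dl : R, 0 < dl -> exists N, forall n, (N <= n)%N ->
     (forall i, (i < d)%N -> hn (F i n - e i) <= dl) /\
     forall c a : 'I_d -> R[i], cabs (h (comb c (fun k => F k n)) (comb a (fun k => F k n))
        - h (comb c e) (comb a e)) <= sabs c * sabs a * dl) ->
  (forall c a : 'I_d -> R[i], cabs (h (comb c e) (comb a e)) <= eps * hn (comb c e) * hn (comb a e)) ->
  exists N (W : nat -> set H), (0 < N)%N /\ forall n, (N <= n)%N ->
    [/\ W n `<=` L n, has_dim (W n) d &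
      forall y u, W n y -> W n u -> cabs (h y u) <= 2 * eps * hn y * hn u].
Proof.
move=> hd heps he hL hF hconv hV.
have dpos : 0 < d%:R :> R by rewrite ltr0n.
have [dl [dlp dla dlb _]] := small3 (1 / (4 * d%:R)) (eps / (8 * d%:R ^+ 2)) 1
  ltac:(by rewrite divr_gt0 ?mulr_gt0) ltac:(by rewrite divr_gt0 ?mulr_gt0 ?exprn_gt0) ltr01.
have [N hN] := hconv dl dlp.
exists N.+1, (fun n => [set y | exists c : 'I_d -> R[i], y = comb c (fun k => F k n)]).
split => // n hnN.
have [hfe hdiff] := hN n (ltnW hnN).
have hd0 : 0 <= dl by apply: ltW.
have hdd : d%:R * dl <= 1 / 4.
  apply: le_trans (ler_wpM2l (ltW dpos) dla) _; rewrite le_eqVlt; apply/orP; left; apply/eqP.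
  by field; rewrite pnatr_eq0 -lt0n.
have hde : d%:R ^+ 2 * dl <= eps / 8.
  apply: le_trans (ler_wpM2l (ltW (exprn_gt0 2 dpos)) dlb) _; rewrite le_eqVlt; apply/orP; left; apply/eqP.
  by field; rewrite pnatr_eq0 -lt0n.
split.
- move=> y [c ->]; apply: sub_sum => // i; apply: subZ => //; exact: hF.
- split.
    split; first by exists (fun _ => 0); rewrite /comb big1 // => i _; rewrite scale0r.
    move=> a x y [c ->] [c' ->]; exists (fun i => a * c i + c' i).
    rewrite /comb scaler_sumr -big_split /=; apply: eq_bigr => i _.
    by rewrite scalerDl scalerA.
  exists (fun i : 'I_d => F i n); split.
  + move=> i; exists (fun j => (j == i)%:R); rewrite /comb (bigD1 i) //= eqxx scale1r.
    by rewrite big1 ?addr0 // => j hj; rewrite (negbTE hj) scale0r.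
  + by move=> c hc; apply: (@indepY d e (fun k => F k n) he dl hd0 hdd hfe c hc).
  + by move=> x [c ->]; exists c.
- move=> y u [c ->] [a ->].
  exact: (@main_est d e (fun k => F k n) he dl hd0 hdd hfe h eps dl hd0 hde (ltW heps) hdiff hV).
Qed.

Lemma orth_bound W v C : 0 <= C -> (forall u, W u -> cabs (ip v u) <= C * hn u) ->
  hn (orth_proj ip W v) <= C.
Proof.
move=> hC hb; rewrite /orth_proj.
set P := [set w | W w /\ forall u, W u -> ip (v - w) u = 0].
case: (pselect (exists w, P w)) => [ex|nex]; last first.
  by rewrite xgetPN ?hn0 // => w pw; apply: nex; exists w.
have [hw hort] := xgetPex 0 ex; set w := xget 0 P in hw hort *.
have e1 : ip w w = ip v w by apply/eqP; rewrite eq_sym -subr_eq0 -ipBl hort.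
have e2 : hn w ^+ 2 <= C * hn w.
  by rewrite hn_sq e1; apply: le_trans (Re_le_cabs _) (hb _ hw).
have := hn_ge0 w; nra.
Qed.

Lemma form_bound (B : H -> H) (lam : R) W y C : 0 <= C ->
  (forall z, W z -> cabs (ip (B z) (B y) - (lam%:C)%C * ip z y) <= C * hn z) ->
  hn (form_proj ip B lam W y) <= C.
Proof.
move=> hC hb; rewrite /form_proj.
set P := [set z | W z /\ _].
case: (pselect (exists w, P w)) => [ex|nex]; last first.
  by rewrite xgetPN ?hn0 // => w pw; apply: nex; exists w.
have [hw hort] := xgetPex 0 ex; set w := xget 0 P in hw hort *.
have e2 : hn w ^+ 2 <= C * hn w.
  by rewrite hn_sq (hort w hw); apply: le_trans (Re_le_cabs _) (hb _ hw).
have := hn_ge0 w; nra.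
Qed.

Lemma le_sum1 d (G : nat -> R) i : (forall j, 0 <= G j) -> (i < d)%N ->
  G i <= 1 + \sum_(j < d) G j.
Proof.
move=> hG hi; rewrite (bigD1 (Ordinal hi)) //= addrCA lerDl addr_ge0 //.
by apply: sumr_ge0 => j _.
Qed.

Lemma subsub (a b c d : H) : (a - b) - (c - d) = (a - c) - (b - d).
Proof. by rewrite !opprB addrACA [RHS]addrACA [- c + _]addrC. Qed.

Lemma linon_id D : linon id D.
Proof. by []. Qed.

Lemma linon_sc (l : R[i]) D : linon (fun x => l *: x) D.
Proof. by move=> a x y _ _; rewrite scalerDr !scalerA mulrC. Qed.

Lemma hn_sc (l : R) x : hn ((l%:C)%C *: x) = `|l| * hn x.
Proof. by rewrite hnZ cabs_real. Qed.

Lemma conv2 D d e (F : nat -> nat -> H) P1 Q1 (lam : R) :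
  is_subspace D -> linon P1 D -> linon Q1 D ->
  (forall i, (i < d)%N -> D (e i)) -> (forall i n, (i < d)%N -> D (F i n)) ->
  (forall dl : R, 0 < dl -> exists N, forall n, (N <= n)%N -> forall i, (i < d)%N ->
     [/\ hn (F i n - e i) <= dl, hn (P1 (F i n) - P1 (e i)) <= dl &
         hn (Q1 (F i n) - Q1 (e i)) <= dl]) ->
  forall dl : R, 0 < dl -> exists N, forall n, (N <= n)%N ->
     (forall i, (i < d)%N -> hn (F i n - e i) <= dl) /\
     forall c a : 'I_d -> R[i],
       cabs ((fun y u => ip (P1 y) (Q1 u) - (lam%:C)%C * ip y u)
               (comb c (fun k => F k n)) (comb a (fun k => F k n))
           - (fun y u => ip (P1 y) (Q1 u) - (lam%:C)%C * ip y u) (comb c e) (comb a e))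
         <= sabs c * sabs a * dl.
Proof.
move=> hD hP hQ hDe hDF hc dl hdl.
set K := 1 + \sum_(j < d) (hn (P1 (e j)) + hn (Q1 (e j)) + hn ((lam%:C)%C *: e j) + hn (e j)).
have hK0 : 0 <= K.
  by rewrite addr_ge0 // sumr_ge0 // => j _; rewrite !addr_ge0 ?hn_ge0.
have hKi i : (i < d)%N -> [/\ hn (P1 (e i)) <= K, hn (Q1 (e i)) <= K,
    hn ((lam%:C)%C *: e i) <= K & hn (e i) <= K].
  move=> hi; have := @le_sum1 d (fun j => hn (P1 (e j)) + hn (Q1 (e j)) + hn ((lam%:C)%C *: e j) + hn (e j)) i
    (fun j => ltac:(by rewrite !addr_ge0 ?hn_ge0)) hi; rewrite -/K => hk.
  have h1 := hn_ge0 (P1 (e i)); have h2 := hn_ge0 (Q1 (e i)).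
  have h3 := hn_ge0 ((lam%:C)%C *: e i); have h4 := hn_ge0 (e i).
  split; lra.
have hl0 : 0 <= `|lam| by [].
have hL1 : 0 < 1 + `|lam| by rewrite ltr_pwDl.
have hK1 : 0 < 2 * K + 1 by lra.
have [dl' [dl'p dl'a dl'b dl'c]] := small3 dl (1 / (1 + `|lam|)) (dl / (2 * (1 + `|lam|) * (2 * K + 1)))
  hdl ltac:(by rewrite divr_gt0) ltac:(by rewrite divr_gt0 // !mulr_gt0).
have [N hN] := hc dl' dl'p.
exists N => n hnN; split.
  by move=> i hi; have [h1 _ _] := hN n hnN i hi; apply: le_trans h1 dl'a.
move=> c a.
set dl2 := (1 + `|lam|) * dl'.
have hdl2 : 0 <= dl2 by rewrite mulr_ge0 // ?ltW // addr_ge0.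
have hdl2_1 : dl2 <= 1.
  have := ler_wpM2l (ltW hL1) dl'b.
  by rewrite [X in _ <= X -> _](_ : _ = 1) //; field; rewrite (gt_eqF hL1).
have hdl2_c : dl2 * (2 * K + 1) <= dl / 2.
  have hM : 0 < (1 + `|lam|) * (2 * K + 1) by apply: mulr_gt0.
  have := ler_wpM2r (ltW hM) dl'c.
  rewrite [X in _ <= X -> _](_ : _ = dl / 2); last first.
    by field; rewrite (gt_eqF hK1) (gt_eqF hL1).
  by move=> h; apply: le_trans h; rewrite /dl2 le_eqVlt; apply/orP; left; apply/eqP; ring.
have hle i : (i < d)%N -> [/\ hn (F i n - e i) <= dl2, hn (P1 (F i n) - P1 (e i)) <= dl2,
   hn (Q1 (F i n) - Q1 (e i)) <= dl2 & hn ((lam%:C)%C *: F i n - (lam%:C)%C *: e i) <= dl2].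
  move=> hi; have [h1 h2 h3] := hN n hnN i hi.
  have w : dl' <= dl2 by rewrite /dl2 mulrDl mul1r lerDl; apply: mulr_ge0 => //; exact: ltW.
  split; try by apply: le_trans w.
  rewrite -scalerBr hn_sc /dl2; have := ler_wpM2l hl0 h1; have := ltW dl'p; lra.
have p1 := @pair_est d e (fun k => F k n) P1 Q1 D dl2 K hD hP hQ
  (fun i hi => conj (hDe i hi) (hDF i n hi)) hdl2 hK0
  (fun i hi => let: And4 a1 a2 a3 _ := hle i hi in let: And4 b1 b2 _ _ := hKi i hi in And4 a2 a3 b1 b2) c a.
have p2 := @pair_est d e (fun k => F k n) (fun x => (lam%:C)%C *: x) id D dl2 K hD (linon_sc _ _) (linon_id _)
  (fun i hi => conj (hDe i hi) (hDF i n hi)) hdl2 hK0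
  (fun i hi => let: And4 a1 _ _ a4 := hle i hi in let: And4 _ _ b3 b4 := hKi i hi in And4 a4 a1 b3 b4) c a.
rewrite /= -!ipZl.
set A1 := ip (P1 _) _; set A2 := ip (P1 _) _; set B1 := ip (_ *: _) _; set B2 := ip (_ *: _) _.
have -> : A1 - B1 - (A2 - B2) = (A1 - A2) + - (B1 - B2) by ring.
apply: le_trans (cabsD _ _) _; rewrite cabsN.
have s1 := sabs_ge0 c; have s2 := sabs_ge0 a.
have q : dl2 * (2 * K + dl2) <= dl / 2.
  apply: le_trans hdl2_c; apply: ler_wpM2l => //; lra.
have q2 : sabs c * sabs a * (dl2 * (2 * K + dl2)) <= sabs c * sabs a * (dl / 2).
  by apply: ler_wpM2l => //; apply: mulr_ge0.
have -> : sabs c * sabs a * dl = sabs c * sabs a * (dl / 2) + sabs c * sabs a * (dl / 2) by field.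
by apply: lerD; apply: le_trans q2.
Qed.

Lemma onb_of V d : has_dim V d ->
  exists e, [/\ ortho d e, (forall i, (i < d)%N -> V (e i)) & V `<=` spanN d e].
Proof.
case=> hVs [b [hbV hbind hbsp]].
pose bn k := oapp b 0 (insub k : option 'I_d).
have bnE (i : 'I_d) : bn i = b i by rewrite /bn valK.
have bnE' k (hk : (k < d)%N) : bn k = b (Ordinal hk) by rewrite /bn insubT.
have hind : indepN d bn.
  move=> c hc k hk; apply: (hbind (fun i => c i) _ (Ordinal hk)).
  by rewrite -[RHS]hc; apply: eq_bigr => i _; rewrite bnE.
have [e [h1 h2 h3]] := @GS d bn hind.
exists e; split => //.
- move=> i hi; apply: (@span_min d bn V hVs _ _ (h2 i hi)) => k hk; rewrite (bnE' k hk); exact: hbV.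
- move=> x /hbsp [c ->]; apply: sub_sum; first exact: span_sub.
  move=> i; apply: subZ; first exact: span_sub.
  by rewrite -bnE; apply: h3 (ltn_ord i).
Qed.

Lemma Vbound V d e (T : H -> H) eps : ortho d e -> is_subspace V ->
  (forall i, (i < d)%N -> V (e i)) -> V `<=` spanN d e ->
  (forall x, V x -> hn (orth_proj ip V (T x)) <= eps * hn x) ->
  forall x u, V x -> V u -> cabs (ip (T x) u) <= eps * hn x * hn u.
Proof.
move=> he hVs heV hVsp hb x u hx hu.
have [w [hw hwp]] := @proj_ex d e V he hVs heV hVsp (T x).
have ex : exists w, ([set w | V w /\ forall u, V u -> ip (T x - w) u = 0]) w by exists w.
have [hp hpp] := xgetPex 0 ex.
set p := xget 0 _ in hp hpp.
have hpb : hn p <= eps * hn x by exact: hb x hx.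
have -> : ip (T x) u = ip p u by apply/eqP; rewrite -subr_eq0 -ipBl hpp.
apply: le_trans (CS _ _) _; apply: ler_wpM2r => //; exact: hn_ge0.
Qed.

Lemma sqrt_ge1 d : (0 < d)%N -> 1 <= Num.sqrt (d%:R : R).
Proof. by move=> hd; rewrite -[X in X <= _]sqrtr1 ler_sqrt ?ler0n // ler1n. Qed.

Lemma conj_lam (lam : R) : ((lam%:C)%C)^* = (lam%:C)%C.
Proof. by apply: conj_Creal; apply/complex_realP; exists lam. Qed.

Lemma comb_in V d e c : is_subspace V -> (forall i, (i < d)%N -> V (e i)) -> V (@comb d c e).
Proof. by move=> hVs heV; apply: sub_sum => // i; apply: subZ => //; apply: heV. Qed.

Lemma choose_seq (T : H -> H) DT (L : nat -> set H) d e :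
  (forall i, (i < d)%N -> DT (e i)) -> regular ip T DT L ->
  exists F : nat -> nat -> H, (forall i n, (i < d)%N -> L n (F i n)) /\
    forall dl : R, 0 < dl -> exists N, forall n, (N <= n)%N -> forall i, (i < d)%N ->
      [/\ hn (F i n - e i) <= dl, hn (T (F i n) - T (e i)) <= dl & hn (F i n - e i) <= dl].
Proof.
move=> hDe [hLD hreg].
have hex : forall k, exists fk : nat -> H, (k < d)%N -> (forall n, L n (fk n)) /\
   (forall e0 : R, 0 < e0 -> exists N, forall n, (N <= n)%N ->
       hn (fk n - e k) + hn (T (fk n) - T (e k)) < e0).
  move=> k; case: (ltnP k d) => hk.
    by have [fk hfk] := hreg (e k) (hDe k hk); exists fk.
  by exists (fun _ => 0).
have [F hF] := choice hex.
exists (fun i n => F i n); split.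
  by move=> i n hi; case: (hF i hi) => h _; apply: h.
move=> dl hdl.
have [N hN] := @unifN (fun i n => hn (F i n - e i) + hn (T (F i n) - T (e i)) < dl) d
  (fun i hi => (hF i hi).2 dl hdl).
exists N => n hnN i hi; have := hN n hnN i hi.
have := hn_ge0 (F i n - e i); have := hn_ge0 (T (F i n) - T (e i)).
by move=> h1 h2 h3; split; lra.
Qed.

Lemma case1 A DA (L : nat -> set H) (lam : R) V d eps : (0 < d)%N -> 0 < eps ->
  selfadjoint ip A DA -> galerkin L -> has_dim V d -> V `<=` DA ->
  (forall x, V x -> hn (orth_proj ip V (A x - (lam%:C)%C *: x)) <= eps * hn x) ->
  regular ip A DA L ->
  exists (N : nat) (W : nat -> set H), (0 < N)%N /\
      forall n, (N <= n)%N ->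
        [/\ W n `<=` L n, has_dim (W n) d &
            forall y, W n y ->
              hn (orth_proj ip (W n) (A y - (lam%:C)%C *: y))
                <= 2 * eps * Num.sqrt (d%:R) * hn y].
Proof.
move=> hd heps [hDs hlin _ _] hL hV hVD hVeps hreg.
have [e [he heV hVsp]] := @onb_of V d hV.
have hVs : is_subspace V by case: hV.
have hDe i : (i < d)%N -> DA (e i) by move=> hi; apply: hVD; apply: heV.
have [F [hFL hFc]] := choose_seq _ _ _ _ _ hDe hreg.
have hLs n : is_subspace (L n) by case: (hL n) => m [].
have hFD i n : (i < d)%N -> DA (F i n) by move=> hi; case: hreg => hLD _; apply: hLD; apply: hFL.
have hconv := @conv2 DA d e F A id lam hDs hlin (linon_id DA) hDe hFD hFc.
have hVh : forall c a : 'I_d -> R[i],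
   cabs ((fun y u => ip (A y) (id u) - (lam%:C)%C * ip y u) (comb c e) (comb a e))
     <= eps * hn (comb c e) * hn (comb a e).
  move=> c a /=; rewrite -ipZl -ipBl.
  exact: (@Vbound V d e (fun x => A x - (lam%:C)%C *: x) eps he hVs heV hVsp hVeps
     _ _ (@comb_in V d e c hVs heV) (@comb_in V d e a hVs heV)).
have [N [W [hN hW]]] := @finish L d e F (fun y u => ip (A y) (id u) - (lam%:C)%C * ip y u) eps hd heps he hLs hFL hconv hVh.
exists N, W; split => // n hnN; have [h1 h2 h3] := hW n hnN; split => // y hy.
have hs := @sqrt_ge1 d hd.
apply: orth_bound.
  by rewrite !mulr_ge0 ?hn_ge0 // ?ltW //; lra.
move=> u hu; have := h3 y u hy hu; rewrite /= -ipZl -ipBl => hb.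
apply: le_trans hb _.
have := hn_ge0 y; have := hn_ge0 u => h4 h5.
have : 0 <= 2 * eps * hn y * hn u by rewrite !mulr_ge0 // ?ltW //; lra.
nra.
Qed.

Lemma case2 A DA (L : nat -> set H) (lam : R) V d eps B DB : (0 < d)%N -> 0 < eps ->
  galerkin L -> has_dim V d -> V `<=` DA ->
  (forall x, V x -> hn (orth_proj ip V (A x - (lam%:C)%C *: x)) <= eps * hn x) ->
  is_sqrt_op ip A DA B DB -> regular ip B DB L ->
    exists (N : nat) (W : nat -> set H), (0 < N)%N /\
      forall n, (N <= n)%N ->
        [/\ W n `<=` L n, has_dim (W n) d &
            forall y, W n y ->
              hn (form_proj ip B lam (W n) y)
                <= 2 * eps * Num.sqrt (d%:R) * hn y].
Proof.
move=> hd heps hL hV hVD hVeps [[hDBs hBlin _ hBadj] _ hDAB hAB] hreg.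
have [e [he heV hVsp]] := @onb_of V d hV.
have hVs : is_subspace V by case: hV.
have hDe i : (i < d)%N -> DB (e i) by move=> hi; have /hDAB [] := hVD _ (heV i hi).
have [F [hFL hFc]] := choose_seq _ _ _ _ _ hDe hreg.
have hLs n : is_subspace (L n) by case: (hL n) => m [].
have hFD i n : (i < d)%N -> DB (F i n) by move=> hi; case: hreg => hLD _; apply: hLD; apply: hFL.
have hFc' : forall dl : R, 0 < dl -> exists N, forall n, (N <= n)%N -> forall i, (i < d)%N ->
      [/\ hn (F i n - e i) <= dl, hn (B (F i n) - B (e i)) <= dl & hn (B (F i n) - B (e i)) <= dl].
  move=> dl hdl; have [N hN] := hFc dl hdl; exists N => n hnN i hi.
  by have [h1 h2 _] := hN n hnN i hi.
have hconv := @conv2 DB d e F B B lam hDBs hBlin hBlin hDe hFD hFc'.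
have hVh : forall c a : 'I_d -> R[i],
   cabs ((fun y u => ip (B y) (B u) - (lam%:C)%C * ip y u) (comb c e) (comb a e))
     <= eps * hn (comb c e) * hn (comb a e).
  move=> c a /=.
  have hx := @comb_in V d e c hVs heV; have hu := @comb_in V d e a hVs heV.
  have hDu := hVD _ hu; have [hDBu hDBBu] := (hDAB _).1 hDu.
  have hDBx : DB (comb c e) by have [] := (hDAB _).1 (hVD _ hx).
  rewrite ((hBadj (B (comb a e)) (B (B (comb a e)))).2 (conj hDBBu erefl) _ hDBx).
  rewrite -(hAB _ hDu) -(conj_lam lam) -ipZr -ipBr ipC cabsJ mulrAC.
  exact: (@Vbound V d e (fun x => A x - (lam%:C)%C *: x) eps he hVs heV hVsp hVeps _ _ hu hx).
have [N [W [hN hW]]] := @finish L d e F (fun y u => ip (B y) (B u) - (lam%:C)%C * ip y u) eps hd heps he hLs hFL hconv hVh.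
exists N, W; split => // n hnN; have [h1 h2 h3] := hW n hnN; split => // y hy.
have hs := @sqrt_ge1 d hd.
apply: form_bound.
  by rewrite !mulr_ge0 ?hn_ge0 // ?ltW //; lra.
move=> u hu; have := h3 y u hy hu => /= hb.
have -> : ip (B u) (B y) - (lam%:C)%C * ip u y = (ip (B y) (B u) - (lam%:C)%C * ip y u)^*.
  by rewrite rmorphB rmorphM /= conj_lam -!ipC.
rewrite cabsJ; apply: le_trans hb _.
have := hn_ge0 y; have := hn_ge0 u => h4 h5.
have : 0 <= 2 * eps * hn y * hn u by rewrite !mulr_ge0 // ?ltW //; lra.
nra.
Qed.
End IP.

Theorem lemma3p6 (R : realType) (H : lmodType R[i]) (ip : H -> H -> R[i])
  (hH : is_sep_inf_dim_hilbert ip)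
  (A : H -> H) (DA : set H) (hA : selfadjoint ip A DA)
  (L : nat -> set H) (hL : galerkin L)
  (lam : R) (V : set H) (d : nat) (hd : (0 < d)%N)
  (hV : has_dim V d) (hVD : V `<=` DA)
  (eps : R) (heps : 0 < eps)
  (hVeps : forall x, V x ->
     hnorm ip (orth_proj ip V (A x - (lam%:C)%C *: x)) <= eps * hnorm ip x) :
  (regular ip A DA L ->
    exists (N : nat) (W : nat -> set H), (0 < N)%N /\
      forall n, (N <= n)%N ->
        [/\ W n `<=` L n, has_dim (W n) d &
            forall y, W n y ->
              hnorm ip (orth_proj ip (W n) (A y - (lam%:C)%C *: y))
                <= 2 * eps * Num.sqrt (d%:R) * hnorm ip y])
  /\
  (nonneg_op ip A DA -> forall (B : H -> H) (DB : set H),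
    is_sqrt_op ip A DA B DB -> regular ip B DB L ->
    exists (N : nat) (W : nat -> set H), (0 < N)%N /\
      forall n, (N <= n)%N ->
        [/\ W n `<=` L n, has_dim (W n) d &
            forall y, W n y ->
              hnorm ip (form_proj ip B lam (W n) y)
                <= 2 * eps * Num.sqrt (d%:R) * hnorm ip y]).
Proof.
case: hH => hipL hipC hge heq _.
split.
- move=> hreg.
  exact: (@case1 R H ip hipL hipC hge heq A DA L lam V d eps hd heps hA hL hV hVD hVeps hreg).
- move=> _ B DB hsq hreg.
  exact: (@case2 R H ip hipL hipC hge heq A DA L lam V d eps B DB hd heps hL hV hVD hVeps hsq hreg).
Qed.
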